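(* Let $B$ be a Borel ideal of $S=k[x_1,\dots,x_n]$ and suppose $(x_1,\dots,x_p)$ is an associated prime of $S/B$. Then there exists $m\in\mathrm{Bgens}(B)$ such that $x_p$ divides $m$ and $\operatorname{Ann}_{S/B}\!\left(\frac{m}{x_p}\right)=(x_1,\dots,x_p)$.
   Context: A Borel ideal is a monomial ideal closed under Borel moves $m\mapsto m\frac{x_{i_1}}{x_{j_1}}\cdots\frac{x_{i_s}}{x_{j_s}}$ ($i_t<j_t$, all $x_{j_t}\mid m$). For a set $T$ of monomials, $\mathrm{Borel}(T)$ is the smallest Borel ideal containing $T$; $\mathrm{Bgens}(B)$ is the unique minimal set $T$ of monomials with $\mathrm{Borel}(T)=B$. For a monomial $\mu$, $\operatorname{Ann}_{S/B}(\mu)=(B:\mu)=\{f\in S: f\mu\in B\}$. *)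

(* Defs.v *)
From HB Require Import structures.
From mathcomp Require Import all_boot all_order all_algebra.
Set Implicit Arguments. Unset Strict Implicit. Unset Printing Implicit Defensive.
Import GRing.Theory.
Local Open Scope ring_scope.

(* The polynomial ring R[x_1,...,x_n], built as iterated univariate
   polynomials: mpoly R 0 = R, mpoly R n.+1 = (mpoly R n)[X]. *)
Fixpoint mpoly (R : comNzRingType) (n : nat) : comNzRingType :=
  if n is n'.+1 then ({poly mpoly R n'} : comNzRingType) else R.

(* The variable x_(i+1) of mpoly R n, for i < n (0-indexed: var 0 is x_1). *)
Fixpoint var_nat (R : comNzRingType) (n : nat) : nat -> mpoly R n :=
  match n return nat -> mpoly R n with
  | 0 => fun _ => 0
  | n'.+1 => fun i => if i is i'.+1 then (var_nat R n' i')%:P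
                      else ('X : {poly mpoly R n'})
  end.

Definition var (R : comNzRingType) (n : nat) (i : 'I_n) : mpoly R n :=
  var_nat R n i.

Definition expo (n : nat) := {ffun 'I_n -> nat}.

Definition mono (R : comNzRingType) (n : nat) (e : expo n) : mpoly R n :=
  \prod_(i < n) var R i ^+ e i.
Arguments var R {n} i.
Arguments mono R {n} e.

Definition is_ideal (S : comNzRingType) (I : S -> Prop) : Prop :=
  [/\ I 0, (forall a b, I a -> I b -> I (a + b)) & (forall r a, I a -> I (r * a))].

Definition gen_ideal (S : comNzRingType) (G : S -> Prop) (f : S) : Prop :=
  exists l : seq (S * S), (forall c, c \in l -> G c.2) /\
    f = \sum_(c <- l) c.1 * c.2.

Definition same_ideal (S : comNzRingType) (I J : S -> Prop) : Prop :=
  forall f, I f <-> J f.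

Definition monomial_ideal (R : comNzRingType) (n : nat) (I : mpoly R n -> Prop) :=
  is_ideal I /\ same_ideal I (gen_ideal (fun f => exists e, f = mono R e /\ I f)).

(* elementary Borel move x^e |-> x^e * x_i / x_j  (i < j, x_j | x^e) *)
Definition borel_move (n : nat) (e : expo n) (i j : 'I_n) : expo n :=
  [ffun k => if k == j then (e k).-1 else if k == i then (e k).+1 else e k].

Definition borel_ideal (R : comNzRingType) (n : nat) (B : mpoly R n -> Prop) :=
  monomial_ideal B /\
  forall (e : expo n) (i j : 'I_n), (i < j)%N -> (0 < e j)%N ->
    B (mono R e) -> B (mono R (borel_move e i j)).

Definition borel_of (R : comNzRingType) (n : nat) (T : expo n -> Prop)
  (f : mpoly R n) : Prop :=
  forall B' : mpoly R n -> Prop, borel_ideal B' ->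
    (forall e, T e -> B' (mono R e)) -> B' f.
Arguments borel_of R {n} T f.

(* T is a minimal set of monomials with Borel(T) = B, i.e. T = Bgens(B) *)
Definition is_Bgens (R : comNzRingType) (n : nat) (B : mpoly R n -> Prop)
  (T : expo n -> Prop) : Prop :=
  same_ideal (borel_of R T) B /\
  forall T' : expo n -> Prop, (forall e, T' e -> T e) ->
    same_ideal (borel_of R T') B -> forall e, T e -> T' e.

(* Ann_{S/B}(f) = (B : f) *)
Definition colon (S : comNzRingType) (B : S -> Prop) (f : S) (g : S) : Prop :=
  B (g * f).

Definition assoc_prime (S : comNzRingType) (B P : S -> Prop) : Prop :=
  exists f : S, same_ideal P (colon B f).

(* the prime (x_1, ..., x_(p+1)) (0-indexed p) *)
Definition var_prime (R : comNzRingType) (n : nat) (p : 'I_n) : mpoly R n -> Prop :=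
  gen_ideal (fun f => exists i : 'I_n, (i <= p)%N /\ f = var R i).
Arguments var_prime R {n} p _.

(* Main.v *)
Require Import Defs.
From HB Require Import structures.
From mathcomp Require Import all_boot all_order all_algebra.
From Stdlib Require Import Classical.
Set Implicit Arguments. Unset Strict Implicit. Unset Printing Implicit Defensive.
Import GRing.Theory.
Local Open Scope ring_scope.

Local Unset Implicit Arguments.
Section Coefs.
Variable R : comNzRingType.

Fixpoint coefn (n : nat) : mpoly R n -> (nat -> nat) -> R :=
  match n return mpoly R n -> (nat -> nat) -> R with
  | 0 => fun f _ => f
  | n'.+1 => fun f E => coefn n' ((f : {poly mpoly R n'})`_(E 0)) (fun i => E i.+1)
  end.

Fixpoint monon (n : nat) : (nat -> nat) -> mpoly R n :=
  match n return (nat -> nat) -> mpoly R n with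
  | 0 => fun _ => 1
  | n'.+1 => fun E => ('X^(E 0) * (monon n' (fun i => E i.+1))%:P : {poly mpoly R n'})
  end.

Fixpoint cstn (n : nat) : R -> mpoly R n :=
  match n return R -> mpoly R n with
  | 0 => fun c => c
  | n'.+1 => fun c => ((cstn n' c)%:P : {poly mpoly R n'})
  end.

Lemma coefn_ext n (f : mpoly R n) E E' :
  (forall i, (i < n)%N -> E i = E' i) -> coefn n f E = coefn n f E'.
Proof.
elim: n f E E' => [//|n IH] f E E' H /=.
rewrite (H 0%N) //; apply: IH => i hi; exact: H.
Qed.

Lemma monon_ext n E E' :
  (forall i, (i < n)%N -> E i = E' i) -> monon n E = monon n E'.
Proof.
elim: n E E' => [//|n IH] E E' H /=.
rewrite (H 0%N) // (IH _ (fun i => E' i.+1)) // => i hi; exact: H.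
Qed.

Lemma coefnD n (f g : mpoly R n) E : coefn n (f + g) E = coefn n f E + coefn n g E.
Proof. elim: n f g E => [//|n IH] f g E /=. by rewrite coefD IH. Qed.

Lemma coefn0 n E : coefn n (0 : mpoly R n) E = 0.
Proof. elim: n E => [//|n IH] E /=. by rewrite coef0 IH. Qed.

Lemma coefn_sum n (I : Type) (l : seq I) (F : I -> mpoly R n) E :
  coefn n (\sum_(x <- l) F x) E = \sum_(x <- l) coefn n (F x) E.
Proof.
elim: l => [|a l IH]; first by rewrite !big_nil coefn0.
by rewrite !big_cons coefnD IH.
Qed.

Lemma coefnCM n c (g : mpoly R n) E : coefn n (cstn n c * g) E = c * coefn n g E.
Proof. elim: n g E => [//|n IH] g E /=. by rewrite coefCM IH. Qed.

Lemma cstn0 n : cstn n 0 = 0.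
Proof. elim: n => [//|n IH] /=. by rewrite IH. Qed.

Lemma coefn1 n E : (forall i, (i < n)%N -> E i = 0%N) -> coefn n (1 : mpoly R n) E = 1.
Proof.
elim: n E => [//|n IH] E H /=.
rewrite coef1 H //= IH // => i hi; exact: H.
Qed.

Lemma coefn_monoM n D E (g : mpoly R n) :
  (forall i, (i < n)%N -> (D i <= E i)%N) ->
  coefn n (monon n D * g) E = coefn n g (fun i => E i - D i)%N.
Proof.
elim: n D E g => [|n IH] D E g H /=; first by rewrite mul1r.
rewrite -(mulrA ('X^(D 0) : {poly mpoly R n})) coefXnM ltnNge H //= coefCM IH // => i hi; exact: H.
Qed.

Lemma coefn_monoM0 n D E (g : mpoly R n) :
  (exists i, (i < n)%N /\ (E i < D i)%N) -> coefn n (monon n D * g) E = 0.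
Proof.
elim: n D E g => [|n IH] D E g [i [hi hlt]] //=.
rewrite -(mulrA ('X^(D 0) : {poly mpoly R n})) coefXnM.
case: i hi hlt => [|i] hi hlt.
  by rewrite hlt coefn0.
case: ifP => _; first by rewrite coefn0.
rewrite coefCM IH //; exists i; split => //.
Qed.

Lemma expand_n n (f : mpoly R n) :
  exists l : seq (nat -> nat), f = \sum_(E <- l) cstn n (coefn n f E) * monon n E.
Proof.
elim: n f => [|n IH] f.
  by exists [:: fun _ => 0%N]; rewrite big_seq1 /= mulr1.
have : forall m, exists l : seq (nat -> nat),
  \sum_(i < m) ((f : {poly mpoly R n})`_i)%:P * 'X^i =
  \sum_(E <- l) cstn n.+1 (coefn n.+1 (f : mpoly R n.+1) E) * monon n.+1 E.
  elim => [|m [l Hl]]; first by exists [::]; rewrite big_ord0 big_nil.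
  have [lm Hm] := IH ((f : {poly mpoly R n})`_m).
  exists (l ++ map (fun E j => if j is j'.+1 then E j' else m) lm).
  rewrite big_ord_recr /= Hl big_cat /= big_map; congr (_ + _).
  rewrite {1}Hm rmorph_sum /= mulr_suml; apply: eq_bigr => E _ /=.
  rewrite polyCM -mulrA; congr (_ * _); exact: mulrC.
move=> /(_ (size (f : {poly mpoly R n}))) [l Hl]; exists l.
rewrite -Hl.
rewrite -{1}[f : {poly mpoly R n}]coefK poly_def; apply: eq_bigr => i _.
by rewrite mul_polyC.
Qed.

End Coefs.
Local Set Implicit Arguments.

Lemma prod_var (R : comNzRingType) n (F : nat -> nat) :
  \prod_(i < n) var_nat R n i ^+ F i = monon R n F.
Proof.
elim: n F => [|n IH] F; first by rewrite big_ord0.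
rewrite big_ord_recl /=.
under eq_bigr => i _ do rewrite add0n /bump leq0n add1n.
rewrite -IH rmorph_prod /=; congr (_ * _); apply: eq_bigr => i _.
by rewrite rmorphXn.
Qed.

Section Expo.
Variable R : comNzRingType.
Variable n : nat.

Definition ef (e : expo n) : nat -> nat :=
  fun i => if insub i is Some o then e o else 0%N.

Lemma efE (e : expo n) (o : 'I_n) : ef e o = e o.
Proof. by rewrite /ef valK. Qed.

Definition addE (e d : expo n) : expo n := [ffun i => e i + d i]%N.
Definition subE (e d : expo n) : expo n := [ffun i => e i - d i]%N.
Definition dl (i : 'I_n) : expo n := [ffun j => nat_of_bool (j == i)].
Definition coef (f : mpoly R n) (e : expo n) : R := coefn R n f (ef e).
Definition cst (c : R) : mpoly R n := cstn R n c.

Lemma mono_monon (e : expo n) : mono R e = monon R n (ef e).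
Proof.
rewrite /mono /var -prod_var; apply: eq_bigr => i _; by rewrite efE.
Qed.

Lemma mono_add (e d : expo n) : mono R (addE e d) = mono R e * mono R d.
Proof.
rewrite /mono -big_split /=; apply: eq_bigr => i _; by rewrite ffunE exprD.
Qed.

Lemma mono_dl (i : 'I_n) : mono R (dl i) = var R i.
Proof.
rewrite /mono (bigD1 i) //= big1 ?mulr1; first by rewrite ffunE eqxx expr1.
by move=> j /negPf hj; rewrite ffunE hj expr0.
Qed.

Lemma coef_monoM (d e : expo n) (g : mpoly R n) :
  coef (mono R d * g) (addE e d) = coef g e.
Proof.
rewrite /coef mono_monon coefn_monoM.
  apply: coefn_ext => i hi.
  have -> : i = Ordinal hi by [].
  by rewrite !efE ffunE addnK.
move=> i hi; have -> : i = Ordinal hi by [].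
by rewrite !efE ffunE leq_addl.
Qed.

Lemma coef_monoM0 (d e : expo n) (g : mpoly R n) :
  (exists i : 'I_n, (e i < d i)%N) -> coef (mono R d * g) e = 0.
Proof.
move=> [i hi]; rewrite /coef mono_monon coefn_monoM0 //.
by exists i; rewrite !efE.
Qed.

Lemma coef_mono (e : expo n) : coef (mono R e) e = 1.
Proof.
rewrite -[mono R e]mulr1 /coef mono_monon coefn_monoM // coefn1 // => i hi.
by rewrite subnn.
Qed.

Lemma coefD (f g : mpoly R n) e : coef (f + g) e = coef f e + coef g e.
Proof. exact: coefnD. Qed.

Lemma coef_sum (I : Type) (l : seq I) (F : I -> mpoly R n) e :
  coef (\sum_(x <- l) F x) e = \sum_(x <- l) coef (F x) e.
Proof. exact: coefn_sum. Qed.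

Lemma coefCM c (g : mpoly R n) e : coef (cst c * g) e = c * coef g e.
Proof. exact: coefnCM. Qed.

Lemma cst0 : cst 0 = 0.
Proof. exact: cstn0. Qed.

Lemma expand (f : mpoly R n) :
  exists l : seq (expo n), f = \sum_(e <- l) cst (coef f e) * mono R e.
Proof.
have [l Hl] := expand_n R n f.
exists (map (fun E : nat -> nat => ([ffun o : 'I_n => E (nat_of_ord o)] : expo n)) l).
rewrite big_map {1}Hl; apply: eq_bigr => E _.
have HE : forall i, (i < n)%N -> E i = ef ([ffun o : 'I_n => E (nat_of_ord o)] : expo n) i.
  by move=> i hi; have -> : i = Ordinal hi by []; rewrite efE ffunE.
rewrite /cst /coef mono_monon -(coefn_ext _ _ f _ _ HE) -(monon_ext _ _ _ _ HE) //.
Qed.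

End Expo.

Section Ideals.
Variable S : comNzRingType.

Lemma ideal_sum (I : S -> Prop) (X : eqType) (l : seq X) (F : X -> S) :
  is_ideal I -> (forall x, x \in l -> I (F x)) -> I (\sum_(x <- l) F x).
Proof.
move=> [I0 ID IM]; elim: l => [|a l IH] H; first by rewrite big_nil.
rewrite big_cons; apply: ID; first by apply: H; rewrite inE eqxx.
by apply: IH => x hx; apply: H; rewrite inE hx orbT.
Qed.

Lemma gen_ideal_ideal (G : S -> Prop) : is_ideal (gen_ideal G).
Proof.
split.
- by exists [::]; rewrite big_nil.
- move=> a b [l1 [H1 ->]] [l2 [H2 ->]]; exists (l1 ++ l2); split.
    by move=> c; rewrite mem_cat => /orP [] ?; [apply: H1 | apply: H2].
  by rewrite big_cat.
- move=> r a [l [H ->]]; exists (map (fun c => (r * c.1, c.2)) l); split.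
    by move=> c /mapP [c' hc' ->] /=; apply: H.
  by rewrite big_map mulr_sumr; apply: eq_bigr => c _ /=; rewrite mulrA.
Qed.

Lemma gen_sub (G I : S -> Prop) : is_ideal I -> (forall g, G g -> I g) ->
  forall f, gen_ideal G f -> I f.
Proof.
move=> hI hG f [l [H ->]]; apply: ideal_sum => // c hc.
case: hI => _ _ IM; apply: IM; apply: hG; exact: H.
Qed.

Lemma gen_mono (G G' : S -> Prop) : (forall g, G g -> G' g) ->
  forall f, gen_ideal G f -> gen_ideal G' f.
Proof. move=> hG f [l [H ->]]; exists l; split => // c hc; apply: hG; exact: H. Qed.

Lemma gen_single (G : S -> Prop) g r : G g -> gen_ideal G (r * g).
Proof.
move=> hg; exists [:: (r, g)]; split; last by rewrite big_seq1.
by move=> c; rewrite inE => /eqP -> /=.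
Qed.

End Ideals.

Section Key.
Variable R : comNzRingType.
Variable n : nat.

Definition leE (d e : expo n) := forall i, (d i <= e i)%N.

Lemma key (G : mpoly R n -> Prop) (Q : expo n -> Prop) f e :
  (forall g, G g -> exists d, g = mono R d /\ Q d) ->
  gen_ideal G f -> coef f e != 0 -> exists d, Q d /\ leE d e.
Proof.
move=> hG [l [Hl ->]]; rewrite coef_sum => Hne.
apply: NNPP => H; move: Hne; rewrite big_seq big1 ?eqxx // => c hc.
have [d [hd hQ]] := hG _ (Hl c hc).
rewrite hd mulrC coef_monoM0 //.
case: (boolP [forall i, d i <= e i]%N) => [/forallP hall | /forallPn [i hi]].
  by exfalso; apply: H; exists d; split.
by exists i; rewrite ltnNge.
Qed.

Lemma addE_subE (d e : expo n) : leE d e -> addE (subE e d) d = e.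
Proof. move=> h; apply/ffunP => i; rewrite !ffunE subnK //. Qed.

Lemma monomial_mem (B : mpoly R n -> Prop) f e :
  monomial_ideal B -> B f -> coef f e != 0 -> B (mono R e).
Proof.
move=> [hI hM] hf hc.
have hG : forall g, (fun f : mpoly R n => exists e : expo n, f = mono R e /\ B f) g ->
    exists d, g = mono R d /\ B (mono R d).
  by move=> g [d [-> hB]]; exists d.
have [d [hd hle]] := key hG ((hM f).1 hf) hc.
rewrite -(addE_subE hle) mono_add; case: hI => _ _ IM; exact: IM.
Qed.

End Key.

Section Borel.
Variable R : comNzRingType.
Variable n : nat.

Definition Bm (B : mpoly R n -> Prop) (e : expo n) := B (mono R e).

Lemma bm_le B d e : borel_ideal B -> Bm B d -> leE d e -> Bm B e.
Proof.
move=> [[[_ _ IM] _] _] hd h; rewrite /Bm -(addE_subE h) mono_add; exact: IM.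
Qed.

Inductive reach (t : expo n) : expo n -> Prop :=
| reach0 : reach t t
| reachS w (i j : 'I_n) : reach t w -> (i < j)%N -> (0 < w j)%N -> reach t (borel_move w i j).

Lemma reach_bm B t w : borel_ideal B -> Bm B t -> reach t w -> Bm B w.
Proof.
move=> hB ht; elim => // w' i j _ IH hij hw; case: hB => _ hmv; exact: hmv.
Qed.

Definition Dset (T : expo n -> Prop) e := exists t w, [/\ T t, reach t w & leE w e].

Definition GD T (g : mpoly R n) := exists d, g = mono R d /\ Dset T d.

Lemma GD_mono T g : GD T g -> exists d, g = mono R d /\ Dset T d.
Proof. by []. Qed.

Lemma D_borel T : borel_ideal (gen_ideal (GD T)).
Proof.
split; [split|].
- exact: gen_ideal_ideal.
- move=> f; split.
  + apply: gen_mono => g [d [-> hD]]; exists d; split => //.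
    rewrite -[mono R d]mul1r; apply: gen_single; by exists d.
  + apply: gen_sub; first exact: gen_ideal_ideal. by move=> g [d [-> h]].
- move=> e i j hij hej hB'.
  have hc : coef (mono R e) e != 0 by rewrite coef_mono oner_neq0.
  have [d [[t [w [hT hr hwd]]] hle]] := key (@GD_mono T) hB' hc.
  have hwe : leE w e by move=> k; exact: leq_trans (hwd k) (hle k).
  rewrite -[mono R _]mul1r; apply: gen_single; exists (borel_move e i j); split => //.
  case: (ltnP (w j) (e j)) => hwj.
    exists t, w; split => // k; rewrite ffunE; case: eqP => [->|_].
      by rewrite -ltnS (prednK hej).
    by case: eqP => _; [exact: leq_trans (hwe k) (leqnSn _) | exact: hwe].
  exists t, (borel_move w i j); split => //.
    by apply: reachS => //; exact: leq_trans hej hwj.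
  move=> k; rewrite !ffunE; case: eqP => [->|_].
    by rewrite -!subn1 leq_sub2r.
  by case: eqP => _; rewrite ?ltnS; exact: hwe.
Qed.

Lemma B_D B T e : is_Bgens B T -> B (mono R e) -> Dset T e.
Proof.
move=> [hs _] hB.
have hb : borel_of R T (mono R e) by apply/hs.
have hg : gen_ideal (GD T) (mono R e).
  apply: hb; first exact: D_borel.
  move=> e' he'; rewrite -[mono R e']mul1r; apply: gen_single; exists e'; split => //.
  by exists e', e'; split; [done | exact: reach0 | move=> k].
have hc : coef (mono R e) e != 0 by rewrite coef_mono oner_neq0.
have [d [[t [w [hT hr hwd]]] hle]] := key (@GD_mono T) hg hc.
exists t, w; split => // k; exact: leq_trans (hwd k) (hle k).
Qed.

Lemma T_B B (T : expo n -> Prop) e : is_Bgens B T -> T e -> B (mono R e).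
Proof. move=> [hs _] he; apply/hs => B' _ H; exact: H. Qed.

End Borel.

From Stdlib Require Import Lia.

Section Main.
Variable R : comNzRingType.
Variable n : nat.

Definition good (B : mpoly R n -> Prop) (p : 'I_n) (mu : expo n) :=
  forall nu : expo n, (forall i : 'I_n, (i <= p)%N -> nu i = 0%N) -> ~ Bm B (addE mu nu).

Lemma backtrack B (p : 'I_n) t w : borel_ideal B -> Bm B t -> reach t w ->
  (0 < w p)%N -> good B p (subE w (dl p)) -> (0 < t p)%N /\ good B p (subE t (dl p)).
Proof.
move=> hB ht; elim => [//|w0 i j hr IH hij hwj] hp hg.
suff [h1 h2] : (0 < w0 p)%N /\ good B p (subE w0 (dl p)) by exact: IH.
have hw : Bm B w0 := reach_bm hB ht hr.
case: (i =P p) => [eip | nip].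
  exfalso; apply: (hg (dl j)).
    move=> k hk; rewrite ffunE; case: eqP => // ekj.
    by move: hk; rewrite ekj -eip leqNgt hij.
  have hjp : j != p by apply/eqP => ejp; move: hij; rewrite ejp eip ltnn.
  suff -> : addE (subE (borel_move w0 i j) (dl p)) (dl j) = w0 by [].
  apply/ffunP => k; rewrite !ffunE.
  case: (k =P j) => [ekj|nkj].
    by rewrite ekj (negPf hjp) subn0 addn1 prednK.
  case: (k =P i) => [eki|nki].
    by subst k; rewrite eip eqxx subn1 addn0.
  have -> : (k == p) = false by apply/eqP => ekp; apply: nki; rewrite ekp eip.
  by rewrite subn0 addn0.
have nip' : (p == i) = false by apply/eqP => e; apply: nip; rewrite e.
have nip'' : (i == p) = false by apply/eqP.
have hpj : p = j -> (1 < w0 p)%N.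
  move=> epj; move: hp; rewrite ffunE epj; case: eqP => // _.
  by case: (w0 j) => [|[|m]].
have hwp : (0 < w0 p)%N.
  case: (p =P j) => [epj|npj]; first by apply: ltnW; exact: hpj.
  by move: hp; rewrite ffunE (introF eqP npj) nip'.
split => // nu hnu hb; apply: (hg nu hnu).
have hu : (0 < addE (subE w0 (dl p)) nu j)%N.
  rewrite !ffunE; case: (j =P p) => [ejp|njp].
    have := hpj (esym ejp); rewrite ejp => /ltP h; apply/ltP.
    rewrite -?plusE -?minusE /=; lia.
  by rewrite subn0 (leq_trans hwj (leq_addr _ _)).
have := hB.2 _ i j hij hu hb.
suff -> : borel_move (addE (subE w0 (dl p)) nu) i j =
          addE (subE (borel_move w0 i j) (dl p)) nu by [].
apply/ffunP => k; rewrite !ffunE.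
case: (k =P j) => [ekj|nkj].
  subst k; case: (j =P p) => [ejp|njp].
    have := hpj (esym ejp); rewrite ejp => /ltP h.
    rewrite -?plusE -?minusE /=; lia.
  move/ltP: hwj => h; rewrite -?plusE -?minusE /=; lia.
case: (k =P i) => [eki|nki].
  by subst k; rewrite nip'' !subn0 addSn.
by [].
Qed.

End Main.

Section Final.
Variable R : comNzRingType.
Variable n : nat.

Lemma addEC (e d : expo n) : addE e d = addE d e.
Proof. by apply/ffunP => k; rewrite !ffunE addnC. Qed.

Lemma addE_dl_sub (t : expo n) (p : 'I_n) : (0 < t p)%N -> addE (dl p) (subE t (dl p)) = t.
Proof.
move=> htp; apply/ffunP => k; rewrite !ffunE.
case: (k =P p) => [->|_] /=; [by rewrite add1n subn1 prednK | by rewrite subn0].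
Qed.

Lemma addE_dl_move (t : expo n) (p i : 'I_n) : i != p ->
  addE (dl i) (subE t (dl p)) = borel_move t i p.
Proof.
move=> nip; apply/ffunP => k; rewrite !ffunE.
case: (k =P p) => [->|nkp] /=.
  by rewrite eq_sym (negPf nip) add0n subn1.
case: (k =P i) => [->|nki] /=; first by rewrite subn0 add1n.
by rewrite subn0.
Qed.

Lemma P_mono (p : 'I_n) (e : expo n) : var_prime R p (mono R e) -> exists i : 'I_n, (i <= p)%N /\ (0 < e i)%N.
Proof.
move=> hP.
have hG : forall g, (fun f => exists i : 'I_n, (i <= p)%N /\ f = var R i) g ->
   exists d, g = mono R d /\ (exists i : 'I_n, (i <= p)%N /\ d = dl i).
  by move=> g [i [hi ->]]; exists (dl i); rewrite mono_dl; split => //; exists i.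
have hc : coef (mono R e) e != 0 by rewrite coef_mono oner_neq0.
have [d [[i [hi ->]] hle]] := key hG hP hc.
exists i; split => //; have := hle i; by rewrite ffunE eqxx.
Qed.

Lemma mono_P (p : 'I_n) (e : expo n) (i : 'I_n) : (i <= p)%N -> (0 < e i)%N -> var_prime R p (mono R e).
Proof.
move=> hip hei.
have hle : leE (dl i) e by move=> k; rewrite ffunE; case: eqP => [->|].

rewrite -(addE_subE hle) mono_add mono_dl; apply: gen_single; by exists i.
Qed.

Lemma assoc_mu B (p : 'I_n) : borel_ideal B -> assoc_prime B (var_prime R p) ->
  exists mu, good B p mu /\ Bm B (addE mu (dl p)).
Proof.
move=> hB [f hf].
have [[I0 ID IM] _] := hB.1.
have hpf : B (var R p * f).
  apply: (hf _).1; rewrite -[var R p]mul1r; apply: gen_single; by exists p.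
have [l hl] := expand f.
have hterm : forall e, coef f e != 0 -> Bm B (addE e (dl p)).
  move=> e he; apply: (monomial_mem hB.1 hpf); by rewrite -mono_dl coef_monoM.
apply: NNPP => hno.
have : exists nu : expo n, (forall i : 'I_n, (i <= p)%N -> nu i = 0%N) /\
   forall e, e \in l -> coef f e != 0 -> Bm B (addE e nu).
  elim: l {hl} => [|a l [nu [hnu H]]].
    by exists [ffun _ => 0%N]; split => // i _; rewrite ffunE.
  case: (boolP (coef f a != 0)) => ha.
    have : ~ good B p a.
      by move=> hg; apply: hno; exists a; split => //; exact: hterm.
    move/not_all_ex_not => [na hna0].
    have [hna hb0] := imply_to_and _ _ hna0.
    have hb := NNPP _ hb0.
    exists (addE na nu); split.
      by move=> i hi; rewrite ffunE hna // hnu.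
    move=> e; rewrite inE => /orP [/eqP -> _ | he hc].
      by apply: (bm_le hB hb) => k; rewrite !ffunE addnA leq_addr.
    by apply: (bm_le hB (H e he hc)) => k; rewrite !ffunE leq_add2l leq_addl.
  exists nu; split => // e; rewrite inE => /orP [/eqP -> | he]; last exact: H.
  by rewrite (negPf ha).
move=> [nu [hnu H]].
have hB' : B (mono R nu * f).
  rewrite hl mulr_sumr; apply: ideal_sum => // e he.
  case: (boolP (coef f e != 0)) => hc.
    by rewrite mulrCA (mulrC (mono R nu)) -mono_add; apply: IM; exact: H.
  by move/negPn/eqP: hc => ->; rewrite cst0 mul0r mulr0.
have [i [hip hi]] := P_mono ((hf (mono R nu)).2 hB').
by move: hi; rewrite hnu.
Qed.

End Final.

Theorem theorem3p2 (k : fieldType) (n : nat) (B : mpoly k n -> Prop)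
  (p : 'I_n) (T : expo n -> Prop) :
  borel_ideal B ->
  is_Bgens B T ->
  assoc_prime B (var_prime k p) ->
  exists (e : expo n) (q : mpoly k n),
    [/\ T e, mono k e = var k p * q & same_ideal (colon B q) (var_prime k p)].
Proof.
move=> hB hT hA.
have [[I0 ID IM] _] := hB.1.
have [mu [hg hb]] := assoc_mu hB hA.
have [t [w [hTt hr hle]]] := B_D hT hb.
have ht : Bm B t := T_B hT hTt.
have hw := reach_bm hB ht hr.
have hwp : (0 < w p)%N.
  rewrite lt0n; apply/negP => /eqP h0; apply: (hg [ffun _ => 0%N]).
    by move=> i _; rewrite ffunE.
  apply: (bm_le hB hw) => k0; have := hle k0; rewrite !ffunE addn0.
  by case: (k0 =P p) => [->|_]; [rewrite h0 | rewrite addn0].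
have hgw : good B p (subE w (dl p)).
  move=> nu hnu hb'; apply: (hg nu hnu); apply: (bm_le hB hb') => k0.
  rewrite !ffunE leq_add2r leq_subLR; have := hle k0; by rewrite !ffunE addnC.
have [htp hgt] := backtrack hB ht hr hwp hgw.
exists t, (mono k (subE t (dl p))); split => //.
  by rewrite -mono_dl -mono_add addE_dl_sub.
move=> g; split.
  move=> hgq; have [l hl] := expand g.
  rewrite hl; apply: ideal_sum; first exact: gen_ideal_ideal.
  move=> e _.
  case: (boolP (coef g e != 0)) => hc; last first.
    move/negPn/eqP: hc => ->; rewrite cst0 mul0r.
    by case: (gen_ideal_ideal (fun f => exists i : 'I_n, (i <= p)%N /\ f = var k i)).
  have hbe : Bm B (addE e (subE t (dl p))).
    by apply: (monomial_mem hB.1 hgq); rewrite mulrC coef_monoM.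
  have : ~ forall i : 'I_n, (i <= p)%N -> e i = 0%N.
    by move=> hz; apply: (hgt e hz); rewrite addEC.
  move/not_all_ex_not => [i hi0].
  have [hip hei] := imply_to_and _ _ hi0.
  have [_ _ PM] := gen_ideal_ideal (fun f => exists i : 'I_n, (i <= p)%N /\ f = var k i).
  apply: PM; have h := @mono_P k n p e i hip; apply: h.
  by rewrite lt0n; apply/eqP.
move=> hP.
have hcol : is_ideal (colon B (mono k (subE t (dl p)))).
  split; rewrite /colon.
  - by rewrite mul0r.
  - by move=> a b ha hb2; rewrite mulrDl; apply: ID.
  - by move=> r a ha; rewrite -mulrA; apply: IM.
apply: (gen_sub hcol _ hP) => g' [i [hip ->]].
rewrite /colon -mono_dl -mono_add.
case: (i =P p) => [->|nip]; first by rewrite addE_dl_sub.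
rewrite addE_dl_move; last by apply/eqP.
apply: hB.2 => //.
by rewrite ltn_neqAle hip andbT; apply/eqP => e; apply: nip; apply: val_inj.
Qed.
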